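(* Let $n\ge 3$, $i\ge 0$, $1\le k\le n$, and $x^\Lambda\partial_k\in\mathcal{B}$. Then $x^\Lambda\partial_k\in\mathcal{L}_i\cap\mathcal{B}_k$ if and only if both of the following hold: (a) $n-k\le \mathrm{WD}(x^\Lambda\partial_k)<r_i$; (b) $i=\mathrm{lev}_i(x^\Lambda\partial_k)$.
   Context: Fix an integer $n\ge 3$. A partition is a sequence $\Lambda=(\lambda_j)_{j\ge1}$ of non-negative integers with finite support; $\mathrm{wt}(\Lambda)=\sum_j j\lambda_j$; $\mathrm{Part}(k)$ is the set of partitions with $\lambda_j=0$ for $j>k$. Write $x^\Lambda=\prod_j x_j^{\lambda_j}$, $\deg(x^\Lambda)=\sum_j\lambda_j$. $\mathcal{B}=\{x^\Lambda\partial_k : 1\le k\le n,\ \Lambda\in\mathrm{Part}(k-1)\}$ and $\mathcal{B}_u=\{x^\Lambda\partial_k\in\mathcal{B}: k=u\}$. For an integer $i\ge-1$, let $r_i\in\{1,\dots,n-1\}$ with $i\equiv r_i\pmod{n-1}$ and $h_i=\lfloor (i-1)/(n-1)\rfloor+1$. Define $\mathrm{WD}(x^\Lambda\partial_k)=\mathrm{wt}(\Lambda)-\deg(x^\Lambda)+n-k$ and $\mathrm{lev}_i(x^\Lambda\partial_k)=h_i\,\mathrm{WD}(x^\Lambda\partial_k)+\deg(x^\Lambda)-1$. For $i\ge-1$, $\mathcal{N}_i=\{b\in\mathcal{B}: \mathrm{lev}_j(b)\le j\text{ for some integer } -1\le j\le i\}$, and $\mathcal{L}_i=\mathcal{N}_i\setminus\mathcal{N}_{i-1}$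 for $i\ge0$. *)

(* Defs.v *)
From mathcomp Require Import all_boot all_order all_algebra.
Set Implicit Arguments. Unset Strict Implicit. Unset Printing Implicit Defensive.
Import Order.TTheory GRing.Theory Num.Theory.
Local Open Scope ring_scope.

(* A partition Λ = (λ_j)_{j>=1} is a function lam : nat -> nat, where lam j = λ_j
   (lam 0 is unused and required to be 0).  Λ ∈ Part(m) iff λ_j = 0 for j > m. *)
Definition inPart (m : nat) (lam : nat -> nat) : Prop :=
  lam 0%N = 0%N /\ forall j : nat, (m < j)%N -> lam j = 0%N.

(* The basis element x^Λ ∂_k is represented by the pair (lam, k). *)
Definition inB (n : nat) (lam : nat -> nat) (k : nat) : Prop :=
  (1 <= k <= n)%N /\ inPart k.-1 lam.

Definition inBu (n u : nat) (lam : nat -> nat) (k : nat) : Prop :=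
  inB n lam k /\ k = u.

(* For x^Λ ∂_k ∈ B, Λ is supported in {1..k-1}, so these finite sums are
   exactly wt(Λ) = Σ_j j λ_j and deg(x^Λ) = Σ_j λ_j. *)
Definition wt (lam : nat -> nat) (k : nat) : int := (\sum_(j < k) j * lam j)%N%:Z.
Definition deg (lam : nat -> nat) (k : nat) : int := (\sum_(j < k) lam j)%N%:Z.

Definition WD (n : nat) (lam : nat -> nat) (k : nat) : int :=
  wt lam k - deg lam k + n%:Z - k%:Z.

(* h_i = floor((i-1)/(n-1)) + 1 ; divz is floor division for positive divisor *)
Definition h (n : nat) (i : int) : int := ((i - 1) %/ (n%:Z - 1))%Z + 1.
Definition r (n : nat) (i : int) : int := ((i - 1) %% (n%:Z - 1))%Z + 1.

Definition lev (n : nat) (i : int) (lam : nat -> nat) (k : nat) : int :=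
  h n i * WD n lam k + deg lam k - 1.

Definition inN (n : nat) (i : int) (lam : nat -> nat) (k : nat) : Prop :=
  inB n lam k /\ exists j : int, -1 <= j /\ j <= i /\ lev n j lam k <= j.

Definition inL (n : nat) (i : int) (lam : nat -> nat) (k : nat) : Prop :=
  inN n i lam k /\ ~ inN n (i - 1) lam k.

(* Main.v *)
Require Import Defs.
From mathcomp Require Import all_boot all_order all_algebra.
From mathcomp Require Import zify.
Import Order.TTheory GRing.Theory Num.Theory.
Local Open Scope ring_scope.

Lemma dec (n : nat) (j : int) : (3 <= n)%N ->
  j = (h n j - 1) * (n%:Z - 1) + r n j /\ 1 <= r n j /\ r n j <= n%:Z - 1.
Proof.
move=> Hn; rewrite /h /r.
have Hm : (n%:Z - 1) != 0 by lia.
have := divz_eq (j - 1) (n%:Z - 1).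
have := modz_ge0 (j - 1) Hm.
have : (0 < n%:Z - 1) by lia.
move=> /(ltz_pmod (j-1)).
set q := ((j - 1) %/ (n%:Z - 1))%Z; set s := ((j - 1) %% (n%:Z - 1))%Z.
move=> H1 H2 H3. split; last by lia.
have -> : (q + 1 - 1) = q by lia. lia.
Qed.

Lemma uniq_dec (m a b s t : int) : 0 < m -> (a - 1) * m + s = (b - 1) * m + t ->
  1 <= s -> s <= m -> 1 <= t -> t <= m -> a = b.
Proof.
move=> Hm E Hs1 Hs2 Ht1 Ht2.
have E2 : (a - b) * m = t - s by rewrite mulrBl !mulrBl in E *; lia.
case: (ltrgtP a b) => // Hab.
- have : (b - a - 1) * m >= 0 by apply: mulr_ge0; lia.
  rewrite !mulrBl mul1r; move: E2; rewrite mulrBl; lia.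
- have : (a - b - 1) * m >= 0 by apply: mulr_ge0; lia.
  rewrite !mulrBl mul1r; move: E2; rewrite mulrBl; lia.
Qed.

Lemma sums (n k : nat) lam : inB n lam k ->
  ((\sum_(j < k) lam j) <= \sum_(j < k) j * lam j /\
   \sum_(j < k) j * lam j <= k.-1 * \sum_(j < k) lam j)%N.
Proof.
move=> [Hk [H0 Hl]]; split.
- apply: leq_sum => j _. case: (val j) => [|j']; first by rewrite H0.
  by rewrite mulSn leq_addr.
- rewrite big_distrr /=; apply: leq_sum => j _.
  apply: leq_mul => //. have := ltn_ord j; lia.
Qed.

Lemma WD_bounds (n k : nat) lam : inB n lam k ->
  0 <= deg lam k /\ n%:Z - k%:Z <= WD n lam k /\
  (deg lam k = 1 -> WD n lam k <= n%:Z - 2).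
Proof.
move=> HB; have [H1 H2] := @sums n k lam HB.
have [/andP [Hk1 Hk2] _] := HB.
rewrite /WD /wt /deg.
move: H1 H2; set D := (\sum_(j < k) lam j)%N; set S := (\sum_(j < k) j * lam j)%N.
move=> H1 H2; split; first by lia.
split; first by lia.
move=> HD. have HD' : D = 1%N by lia.
rewrite HD' muln1 in H2. lia.
Qed.

Theorem theorem2p15 (n : nat) (i : int) (k : nat) (lam : nat -> nat) :
  (3 <= n)%N -> 0 <= i -> (1 <= k <= n)%N -> inB n lam k ->
  (inL n i lam k /\ inBu n k lam k) <->
  ((n - k)%N%:Z <= WD n lam k /\ WD n lam k < r n i /\ i = lev n i lam k).
Proof.
move=> Hn Hi /andP [Hk1 Hk2] HB.
have [Hd [HW HW1]] := @WD_bounds n k lam HB.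
have Hnk : (n - k)%N%:Z = n%:Z - k%:Z by lia.
rewrite Hnk.
have Hm : 0 < n%:Z - 1 by lia.
move: HW HW1 Hd; set W := WD n lam k; set d := deg lam k => HW HW1 Hd.
have levE : forall j, lev n j lam k = h n j * W + d - 1 by [].
clearbody W d.
have [Ei [Hr1 Hr2]] := @dec n i Hn.
move: Ei Hr1 Hr2; set hi := h n i; set ri := r n i => Ei Hr1 Hr2.
split.
- move=> [[[_ [j [Hj1 [Hj2 Hj3]]]] Hn'] _].
  have Hall : forall j, -1 <= j -> j <= i - 1 -> j < lev n j lam k.
    move=> j' Hj1' Hj2'; rewrite ltNge; apply/negP => Hc.
    apply: Hn'; split => //; exists j'; lia.
  have Hle : lev n i lam k <= i.
    case: (ltrP j i) => Hji; last by have E : j = i; [lia | rewrite -E].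
    have := Hall j Hj1; lia.
  have [Ei1 [Hs1 Hs2]] := @dec n (i - 1) Hn.
  have Hge : i <= lev n i lam k.
    have := Hall (i - 1) ltac:(lia) ltac:(lia).
    rewrite !levE -/hi.
    case: (ltrP 1 ri) => Hr.
    + have -> : h n (i - 1) = hi.
        apply: (@uniq_dec (n%:Z - 1) _ _ (r n (i-1)) (ri - 1) Hm); rewrite -?Ei1; lia.
      lia.
    + have -> : h n (i - 1) = hi - 1.
        apply: (@uniq_dec (n%:Z - 1) _ _ (r n (i-1)) ((n%:Z - 1)) Hm); rewrite -?Ei1;
          rewrite ?mulrBl ?mul1r in Ei *; lia.
      rewrite mulrBl mul1r; lia.
  have Hlev : i = lev n i lam k by lia.
  split; first lia. split; last done.
  move: Hlev; rewrite levE.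
  case: (ltrP 0 i) => Hi0.
  + have Hh : 1 <= hi.
      case: (ltrP 0 hi) => Hh //.
      have : 0 <= (- hi) * (n%:Z - 1) by apply: mulr_ge0; lia.
      move: Ei; rewrite mulNr mulrBl mul1r; lia.
    have [Ej [Ht1 Ht2]] := @dec n (i - ri) Hn.
    have Hj0 : h n (i - ri) = hi - 1.
      apply: (@uniq_dec (n%:Z - 1) _ _ (r n (i-ri)) ((n%:Z - 1)) Hm); rewrite -?Ej;
        rewrite ?mulrBl ?mul1r in Ei *; lia.
    have Hp : 0 <= (hi - 1) * (n%:Z - 1) by apply: mulr_ge0; lia.
    have := Hall (i - ri) ltac:(lia) ltac:(lia).
    rewrite levE Hj0 mulrBl mul1r; lia.
  + have Hi00 : i = 0 by lia.
    have Hh0 : hi = 0.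
      apply: (@uniq_dec (n%:Z - 1) _ _ (ri) ((n%:Z - 1)) Hm); rewrite -?Ei; rewrite ?mulrBl ?mul1r; lia.
    have Hr0 : ri = n%:Z - 1.
      move: Ei; rewrite Hh0 mulrBl mul1r mul0r; lia.
    rewrite -/hi -/W -/d Hh0 mul0r add0r => Hd1.
    have := HW1 ltac:(lia); lia.
- move=> [_ [HWr Hlev]].
  split; last by split.
  split.
  + split => //; exists i; split; first lia; split => //; lia.
  + move=> [_ [j [Hj1 [Hj2 Hj3]]]].
    have [Ej [Ht1 Ht2]] := @dec n j Hn.
    move: Ej Ht1 Ht2 Hj3; rewrite levE; set hj := h n j; set rj := r n j => Ej Ht1 Ht2 Hj3.
    move: Hlev; rewrite levE -/hi => Hlev.
    case: (ltrgtP hj hi) => Hc.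
    * have Hp : 0 <= (hi - hj - 1) * ((n%:Z - 1) - W) by apply: mulr_ge0; lia.
      move: Hp Ej Ei Hj3 Hlev; rewrite !mulrBl !mulrBr !mul1r; lia.
    * have Hp : 0 <= (hj - hi - 1) * (n%:Z - 1) by apply: mulr_ge0; lia.
      move: Hp Ej Ei; rewrite !mulrBl !mul1r; lia.
    * move: Hj3; rewrite Hc; lia.
Qed.
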